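(* Let $k\in\{1,\dots,n\}$, let $\nu$ be an $n$-colorless partition with $\nu_1<n$, and let $\mu$ be a partition with $\mu_1<n$ (so $\nu'_n=\mu'_n=0$). Let $\tau\in\mathfrak S_n$ be the permutation determined by $\tau(\overline{\nu'_j-j+k})=j$ for $1\le j\le n$. For $l=2,\dots,n$ let $\nu_{\ge l}$ be the partition conjugate to $(\nu'_l,\nu'_{l+1},\dots,\nu'_n)$. Consider the finite collection of colored partitions consisting, for each $l=2,\dots,n$, of $\mu'_{l-1}-\mu'_l$ copies of $\nu_{\ge l}$, in which the box $(x,y)$ carries color $\overline{k-l+1+x-y}$. For $j\in\{1,\dots,n\}$, let $\sharp(CC_j)$ (resp. $\sharp(CV_j)$) be the total number, over this collection, of concave (resp. convex) corners of color $j$. Then for all $j\in\{1,\dots,n\}$, $$\sharp(CC_j)-\sharp(CV_j)=\mu'_{\tau(j)}-\mu'_{\tau(j-1)}+\mu'_1\delta_{j,k},$$ where $\tau(0)$ means $\tau(n)$.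
   Context: Fix $n\ge3$. For an integer $a$, $\overline a\in\{1,\dots,n\}$ denotes its representative mod $n$; colors are read mod $n$ in $\{1,\dots,n\}$. A partition $\nu$ is $n$-colorless if, for every residue $i$ mod $n$, the number of boxes $(x,y)$ ($\nu_x\ge y$) with $x-y\equiv i$ is the same. For such $\nu$ with $\nu_1<n$, the integers $\nu'_j-j+k$ ($1\le j\le n$) are pairwise distinct mod $n$, so $\tau$ is well-defined. Corners of a partition $\gamma$ with conjugate $\gamma'$: - $(x,y)\in\mathbb Z_{\ge1}^2$ is a convex corner if $\gamma'_{y+1}<\gamma'_y=x$; - $(x,y)$ is a concave corner if $\gamma'_y=x-1$ and either $y=1$ or $\gamma'_{y-1}>x-1$. The color of a corner $(x,y)$ is the color assigned to position $(x,y)$ by the rule stated in the claim. *)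

(* Defs.v *)
From mathcomp Require Import all_boot all_order all_algebra.
Set Implicit Arguments. Unset Strict Implicit. Unset Printing Implicit Defensive.
Import Order.TTheory GRing.Theory Num.Theory.

(* A partition is a weakly decreasing sequence of positive naturals
   (nu_1 >= nu_2 >= ... > 0); nu_x = nth 0 nu (x-1), 1-indexed. *)
Definition is_partition (s : seq nat) : bool :=
  sorted geq s && all (fun a => 0 < a) s.

Definition part1 (s : seq nat) : nat := head 0 s.

Definition conjp (s : seq nat) (y : nat) : nat := count (fun a => y <= a) s.

(* conjugate of a (weakly decreasing, possibly zero-padded) sequence,
   returned as a partition (sequence of positive parts) *)
Definition conj_seq (s : seq nat) : seq nat :=
  [seq count (fun a => y <= a) s | y <- iota 1 (foldr maxn 0 s)].

Definition colr (n : nat) (a : int) : nat :=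
  let r := `|(a %% n%:Z)%Z|%N in if r == 0 then n else r.

Definition boxcount (n : nat) (nu : seq nat) (i : nat) : nat :=
  \sum_(0 <= x0 < size nu) \sum_(0 <= y0 < nth 0 nu x0)
     ((x0.+1%:Z - y0.+1%:Z) == i%:Z %[mod n%:Z])%Z.

Definition colorless (n : nat) (nu : seq nat) : Prop :=
  forall i j, i < n -> j < n -> boxcount n nu i = boxcount n nu j.

Definition nu_ge (n : nat) (nu : seq nat) (l : nat) : seq nat :=
  conj_seq [seq conjp nu y | y <- iota l (n.+1 - l)].

Definition is_convex (g : seq nat) (x y : nat) : bool :=
  (conjp g y.+1 < conjp g y) && (conjp g y == x).

Definition is_concave (g : seq nat) (x y : nat) : bool :=
  (conjp g y == x.-1) && ((y == 1) || (x.-1 < conjp g y.-1)).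

(* number of corners (x,y) of gamma of kind P whose color c x y equals j.
   All corners satisfy 1 <= x <= size g + 1 and 1 <= y <= g_1 + 1,
   so the bounded enumeration counts all of them. *)
Definition ncorners (P : seq nat -> nat -> nat -> bool) (g : seq nat)
    (c : nat -> nat -> nat) (j : nat) : nat :=
  \sum_(1 <= x < (size g).+2) \sum_(1 <= y < (foldr maxn 0 g).+2)
     (P g x y && (c x y == j)).

Definition ncorners_coll (P : seq nat -> nat -> nat -> bool) (n k : nat)
    (nu mu : seq nat) (j : nat) : nat :=
  \sum_(2 <= l < n.+1)
     (conjp mu l.-1 - conjp mu l) *
     ncorners P (nu_ge n nu l)
       (fun x y => colr n (k%:Z - l%:Z + 1 + x%:Z - y%:Z)) j.

(* Main.v *)
Require Import Defs.
From mathcomp Require Import all_boot all_order all_algebra zify ring lra.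
Import Order.TTheory GRing.Theory Num.Theory.
Set Implicit Arguments. Unset Strict Implicit. Unset Printing Implicit Defensive.
Section Helpers.
Local Open Scope ring_scope.

Lemma colr_dvd n (a : int) : (0 < n)%N -> (n%:Z %| ((colr n a)%:Z - a)%R)%Z.
Proof.
move=> n0; rewrite /colr.
have hge : (0 <= (a %% n%:Z)%Z)%R by apply: modz_ge0; rewrite eqz_nat -lt0n.
have E : (`|(a %% n%:Z)%Z|%N)%:Z = (a %% n%:Z)%Z by rewrite gez0_abs.
case: eqP => [r0|_].
  have : (a %% n%:Z)%Z = 0 by rewrite -E r0.
  move=> am; rewrite -eqz_mod_dvd; apply/eqP.
  by rewrite am modzz.
rewrite E -eqz_mod_dvd; apply/eqP; by rewrite modz_mod.
Qed.

Lemma colr_range n (a : int) : (0 < n)%N -> (1 <= colr n a <= n)%N.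
Proof.
move=> n0; rewrite /colr; case: eqP => [_|r0]; first by rewrite n0 leqnn.
have hge : (0 <= (a %% n%:Z)%Z)%R by apply: modz_ge0; rewrite eqz_nat -lt0n.
have hlt : ((a %% n%:Z)%Z < n%:Z)%R by apply: ltz_pmod.
have E : (`|(a %% n%:Z)%Z|%N)%:Z = (a %% n%:Z)%Z by rewrite gez0_abs.
apply/andP; split; first by rewrite lt0n; apply/eqP.
by apply: ltnW; rewrite -ltz_nat E.
Qed.

Lemma mod_uniq n x y : (1 <= x <= n)%N -> (1 <= y <= n)%N -> (n%:Z %| (x%:Z - y%:Z)%R)%Z -> x = y.
Proof.
move=> /andP[x1 xn] /andP[y1 yn].
rewrite -eqz_mod_dvd !modz_nat => /eqP [] H.
have: (x %% n = y %% n)%N by [].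
have := x1; have := y1; move: xn yn.
rewrite (leq_eqVlt x n) (leq_eqVlt y n) => /orP[/eqP->|xlt] /orP[/eqP->|ylt] _ _;
  rewrite ?modnn ?(modn_small xlt) ?(modn_small ylt) //.
- by move=> e; move: y1; rewrite -e.
- by move=> e; move: x1; rewrite e.
Qed.

Lemma colrP n (a : int) j : (0 < n)%N -> (1 <= j <= n)%N ->
  (colr n a == j) = (n%:Z %| (a - j%:Z)%R)%Z.
Proof.
move=> n0 jr; apply/eqP/idP => [<-|H].
  by rewrite -opprB rpredN colr_dvd.
apply: mod_uniq; [exact: colr_range | exact: jr |].
have -> : ((colr n a)%:Z - j%:Z = ((colr n a)%:Z - a) + (a - j%:Z))%R.
  by rewrite addrA subrK.
by rewrite rpredD // colr_dvd.
Qed.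

End Helpers.

Lemma conjp_mono g y y' : y <= y' -> conjp g y' <= conjp g y.
Proof. move=> h; apply: sub_count => a /= ha; exact: leq_trans h ha. Qed.

Lemma conjp_max g y : foldr maxn 0 g < y -> conjp g y = 0.
Proof.
elim: g => //= a g IH h; rewrite /conjp /= -/(conjp g y) IH; last first.
  by apply: leq_ltn_trans h; apply: leq_maxr.
rewrite addn0; apply/eqP; rewrite eqb0 -ltnNge.
by apply: leq_ltn_trans h; apply: leq_maxl.
Qed.

Lemma conjp_size g y : conjp g y <= size g.
Proof. exact: count_size. Qed.

Lemma sum_pick a b x0 (p : nat -> bool) :
  \sum_(a <= x < b) ((x0 == x) && p x) = ((a <= x0 < b) && p x0).
Proof.
elim: b => [|b IH]; first by rewrite big_geq // ltn0 andbF.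
case: (leqP a b) => ab.
  rewrite big_nat_recr //= IH.
  case: (ltngtP x0 b) => [lt|gt|->].
  - by rewrite andbT addn0 ltnS (ltnW lt) andbT.
  - by rewrite andbF /= ltnS (leqNgt x0 b) gt andbF.
  - by rewrite andbF /= ab ltnSn.
rewrite big_geq //; case: (leqP a x0) => //= ax.
by rewrite ltnS leqNgt (leq_trans ab ax).
Qed.

Lemma sum_trunc (F : nat -> nat) M K : 1 <= K <= M ->
  (forall y, K <= y < M -> F y = 0) ->
  \sum_(1 <= y < M) F y = \sum_(1 <= y < K) F y.
Proof.
move=> /andP[K1 KM] h; rewrite (big_cat_nat (n:=K)) //=.
rewrite [X in _ + X = _](_ : _ = 0) ?addn0 //.
by rewrite big_nat_cond big1 // => y /andP[/h -> _].
Qed.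

Lemma ncv_cols g c j : ncorners is_convex g c j =
  \sum_(1 <= y < (foldr maxn 0 g).+2)
     ((conjp g y.+1 < conjp g y) && (c (conjp g y) y == j)).
Proof.
rewrite /ncorners exchange_big_nat; apply: eq_big_nat => y _.
rewrite /is_convex.
under eq_big_nat => x _ do rewrite -andbA andbC -andbA.
rewrite -/(is_true _) /=.
have -> : \sum_(1 <= i < (size g).+2) ((conjp g y == i) && ((c i y == j) && (conjp g y.+1 < conjp g y)))
   = \sum_(1 <= i < (size g).+2) ((conjp g y == i) && ((c (conjp g y) y == j) && (conjp g y.+1 < conjp g y))).
  by apply: eq_big_nat => x _; case: eqP => // ->.
rewrite sum_pick.
case: (ltnP (conjp g y.+1) (conjp g y)) => h; last by rewrite !andbF.
rewrite !andbT.
have -> : (0 < conjp g y < (size g).+2) by rewrite (leq_ltn_trans (leq0n _) h) /= ltnS (leq_trans (conjp_size g y)).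
by [].
Qed.

Lemma ncc_cols g c j : ncorners is_concave g c j =
  \sum_(1 <= y < (foldr maxn 0 g).+2)
     (((y == 1) || (conjp g y < conjp g y.-1)) && (c (conjp g y).+1 y == j)).
Proof.
rewrite /ncorners exchange_big_nat; apply: eq_big_nat => y _.
rewrite /is_concave.
have -> : \sum_(1 <= i < (size g).+2) ((conjp g y == i.-1) && ((y == 1) || (i.-1 < conjp g y.-1)) && (c i y == j))
   = \sum_(1 <= i < (size g).+2) (((conjp g y).+1 == i) && (((y == 1) || (conjp g y < conjp g y.-1)) && (c (conjp g y).+1 y == j))).
  apply: eq_big_nat => x /andP[x1 _].
  case: x x1 => // x _ /=.
  by rewrite eqSS; case: eqP => // ->; rewrite andbA.
rewrite sum_pick ltnS.
by rewrite ltnS ltnS (conjp_size g y).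
Qed.

Lemma zero_after g K y : conjp g K = 0 -> K <= y -> conjp g y = 0.
Proof. by move=> h Ky; apply/eqP; rewrite -leqn0 -h conjp_mono. Qed.

Lemma cols_extend g c j N : 1 <= N -> conjp g N = 0 ->
  ncorners is_convex g c j = \sum_(1 <= y < N.+1)
     ((conjp g y.+1 < conjp g y) && (c (conjp g y) y == j)) /\
  ncorners is_concave g c j = \sum_(1 <= y < N.+1)
     (((y == 1) || (conjp g y < conjp g y.-1)) && (c (conjp g y).+1 y == j)).
Proof.
move=> N1 CN.
set M := (foldr maxn 0 g).+1.
have CM : conjp g M = 0 by apply: conjp_max.
set K := minn M N.
have CK : conjp g K = 0 by rewrite /K /minn; case: ifP.
have K1 : 1 <= K by rewrite leq_min N1.
have Z y : K.+1 <= y -> conjp g y = 0 /\ conjp g y.-1 = 0 /\ y != 1.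
  move=> Ky; split; first by apply: (zero_after CK); apply: ltnW.
  split; first by apply: (zero_after CK); case: y Ky.
  by case: y Ky => // -[] //; rewrite ltnS leqn0 => /eqP K0; move: K1; rewrite K0.
rewrite ncv_cols ncc_cols; split.
  rewrite (@sum_trunc _ _ K.+1); last 2 first.
  - by rewrite /K /M; lia.
  - move=> y /andP[Ky _]; have [C0 _] := Z _ Ky.
    by rewrite C0 ltn0.
  rewrite [RHS](@sum_trunc _ _ K.+1) //; last first.
  - move=> y /andP[Ky _]; have [C0 _] := Z _ Ky.
    by rewrite C0 ltn0.
  by rewrite /K /M; lia.
rewrite (@sum_trunc _ _ K.+1); last 2 first.
- by rewrite /K /M; lia.
- move=> y /andP[Ky _]; have [C0 [C1 y1]] := Z _ Ky.
  by rewrite C0 C1 ltnn (negbTE y1).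
rewrite [RHS](@sum_trunc _ _ K.+1) //; last first.
- move=> y /andP[Ky _]; have [C0 [C1 y1]] := Z _ Ky.
  by rewrite C0 C1 ltnn (negbTE y1).
by rewrite /K /M; lia.
Qed.

Section Tele.
Local Open Scope ring_scope.
Variables (g : seq nat) (c : nat -> nat -> nat) (j : nat).
Hypothesis hc : forall x y, c x.+1 y.+1 = c x y.
Let C := conjp g.
Let cc y := (((y == 1) || (C y < C y.-1)) && (c (C y).+1 y == j))%N.
Let cv y := ((C y.+1 < C y) && (c (C y) y == j))%N.
Let A y := (c (C y).+1 y == j).
Let V y := (c (C y) y == j).

Lemma tele_step y : (0 < y)%N -> (cc y.+1)%:Z = (A y.+1)%:Z - (V y)%:Z + (cv y)%:Z.
Proof.
move=> y0; rewrite /cc /cv /A /V /=.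
case: (ltnP (C y.+1) (C y)) => h /=.
  by rewrite orbT /= subrK.
have e : C y.+1 = C y by apply/eqP; rewrite eqn_leq h andbT conjp_mono.
have -> : (y.+1 == 1%N) = false by rewrite eqSS; case: y y0 {h e}.
by rewrite e hc subrr addr0.
Qed.

Lemma tele N :
  (\sum_(1 <= y < N.+2) cc y)%N%:Z - (\sum_(1 <= y < N.+2) cv y)%N%:Z =
  (\sum_(1 <= y < N.+2) A y)%N%:Z - (\sum_(1 <= y < N.+1) V y)%N%:Z - (cv N.+1)%:Z.
Proof.
elim: N => [|N IH].
  rewrite !big_nat1 big_geq //= /cc /A /=.
  by rewrite subr0.
rewrite !(big_nat_recr N.+2 1) //= (big_nat_recr N.+1 1 (fun y => nat_of_bool (V y))) //=.
rewrite !PoszD tele_step //.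
set p := Posz (A N.+2); set q := Posz (V N.+1); set r := Posz (cv N.+1); set s := Posz (cv N.+2).
move: IH; lra.
Qed.
End Tele.

Lemma geq_transitive : transitive geq.
Proof. by move=> b a c /= h1 h2; apply: leq_trans h2 h1. Qed.

Lemma count_dec s t y : sorted geq s -> 0 < t -> 0 < y ->
  (y <= count (fun a => t <= a) s) = (t <= nth 0 s y.-1).
Proof.
elim: s y => [|a s IH] y /= hs t0 y0; first by rewrite nth_nil; case: y y0 => //; case: t t0.
have hall := order_path_min geq_transitive hs.
have hs' : sorted geq s by move: hs; case: s {IH hall} => //= b s /andP[].
case: (leqP t a) => ta /=.
  case: y y0 => // -[|y] _ /=; first by rewrite ta.
  by rewrite add1n ltnS IH.
have c0 : count (fun a0 => t <= a0) s = 0.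
  rewrite (eq_in_count (a2:=pred0)) ?count_pred0 // => x /(allP hall) /= xa.
  by apply/negbTE; rewrite -ltnNge; exact: leq_ltn_trans xa ta.
rewrite c0 add0n; case: y y0 => // -[|y] _ /=; first by rewrite (leqNgt t a) ta.
rewrite /=; apply/esym/negbTE; rewrite -ltnNge.
case: (ltnP y (size s)) => ys; last by rewrite nth_default.
have := allP hall _ (mem_nth 0 ys) => /= h; exact: leq_ltn_trans h ta.
Qed.

Lemma nth_le_max s i : nth 0 s i <= foldr maxn 0 s.
Proof.
elim: s i => [|a s IH] [|i] //=; first exact: leq_maxl.
exact: leq_trans (IH i) (leq_maxr _ _).
Qed.

Lemma count_iota_le X M : count (fun t => t <= X) (iota 1 M) = minn X M.
Proof.
elim: M => [|M IH]; first by rewrite /= minn0.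
rewrite -(addn1 M) iotaD count_cat IH /= addn0 add1n; lia.
Qed.

Lemma conj_conj s y : sorted geq s -> 0 < y -> conjp (conj_seq s) y = nth 0 s y.-1.
Proof.
move=> hs y0; rewrite /conjp /conj_seq count_map.
rewrite (eq_in_count (a2 := fun t => t <= nth 0 s y.-1)); last first.
  by move=> t; rewrite mem_iota => /andP[t1 _] /=; rewrite count_dec.
rewrite count_iota_le; apply/minn_idPl; exact: nth_le_max.
Qed.

Lemma corners_diff g c j N : (forall x y, c x.+1 y.+1 = c x y) -> conjp g N.+1 = 0 ->
  ((ncorners is_concave g c j)%:Z - (ncorners is_convex g c j)%:Z =
  (\sum_(1 <= y < N.+2) (c (conjp g y).+1 y == j))%N%:Z
   - (\sum_(1 <= y < N.+1) (c (conjp g y) y == j))%N%:Z)%R.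
Proof.
move=> hc CN.
have [-> ->] := cols_extend c j (ltn0Sn N) CN.
rewrite (tele g j hc N).
have -> : (conjp g N.+2 < conjp g N.+1) = false by rewrite CN ltn0.
by rewrite subr0.
Qed.

Lemma foldr_head s : sorted geq s -> foldr maxn 0 s = head 0 s.
Proof.
elim: s => [|a s IH] //= hs.
have hs' : sorted geq s by move: hs; case: s {IH} => //= b s /andP[].
rewrite IH //; apply/maxn_idPl.
by move: hs; case: s {IH hs'} => //= b s /andP[].
Qed.

Lemma conjp_n_zero n s : is_partition s -> part1 s < n -> conjp s n = 0.
Proof.
move=> /andP[hs _] h; apply: conjp_max; rewrite foldr_head //.
Qed.

Section Main.
Local Open Scope ring_scope.
Variables (n k : nat) (nu : seq nat) (tau : nat -> nat).
Hypotheses (n3 : (3 <= n)%N) (kr : (1 <= k <= n)%N) (pnu : is_partition nu)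
  (nu1 : (part1 nu < n)%N)
  (htau : forall j, (1 <= j <= n)%N ->
     tau (colr n ((conjp nu j)%:Z - j%:Z + k%:Z)) = j).

Let a m := (conjp nu m)%:Z - m%:Z + k%:Z.
Let n0 : (0 < n)%N. Proof. exact: leq_trans n3. Qed.

Lemma surj j : (1 <= j <= n)%N -> exists2 m, (1 <= m <= n)%N & colr n (a m) = j.
Proof.
move=> jr.
set f := fun m => colr n (a m).
have U : uniq (map f (iota 1 n)).
  rewrite map_inj_in_uniq ?iota_uniq // => x y.
  rewrite !mem_iota !add1n !ltnS => xr yr e.
  by rewrite -(htau xr) -(htau yr); congr tau.
have S : {subset map f (iota 1 n) <= iota 1 n}.
  move=> x /mapP[m _ ->]; rewrite mem_iota add1n ltnS; exact: colr_range.
have [_ E] := uniq_min_size U S (eq_leq (esym (size_map f (iota 1 n)))) .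
have : j \in map f (iota 1 n) by rewrite E mem_iota add1n ltnS.
by case/mapP=> m; rewrite mem_iota add1n ltnS => mr ->; exists m.
Qed.

Lemma key m j : (1 <= m <= n)%N -> (1 <= j <= n)%N ->
  (colr n (a m) == j) = (m == tau j).
Proof.
move=> mr jr; apply/eqP/eqP => [<-|->]; first by rewrite (htau mr).
have [m' mr' <-] := surj jr; by rewrite (htau mr').
Qed.

Lemma tau_range j : (1 <= j <= n)%N -> (1 <= tau j <= n)%N /\ colr n (a (tau j)) = j.
Proof. by move=> jr; have [m mr <-] := surj jr; rewrite /a (htau mr). Qed.

Lemma tau_n j : (1 <= j <= n)%N -> (tau j == n) = (j == k).
Proof.
move=> jr.
have ck : colr n (a n) = k.
  apply/eqP; rewrite colrP // /a (conjp_n_zero pnu nu1) addrK sub0r rpredN.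
  exact: dvdzz.
by rewrite eq_sym -key ?ck 1?eq_sym // n0 leqnn.
Qed.

Let pj j := if j == 1%N then n else j.-1.

Lemma pj_range j : (1 <= j <= n)%N -> (1 <= pj j <= n)%N.
Proof.
rewrite /pj; case: eqP => [_ _|]; first by rewrite n0 leqnn.
by case: j => // -[] // j _ /andP[_ jn] /=; apply: ltnW.
Qed.

Lemma colr_succ b j : (1 <= j <= n)%N -> (colr n (b + 1) == j) = (colr n b == pj j).
Proof.
move=> jr; rewrite !colrP //; last exact: pj_range.
rewrite /pj; case: eqP => [->|j1].
  by rewrite addrK (rpredBr _ (dvdzz _)).
case: j jr j1 => // j _ _ /=.
have -> : b + 1 - (j.+1)%:Z = b - j%:Z by rewrite intS; ring.
by [].
Qed.

Lemma per_l l j : (2 <= l <= n)%N -> (1 <= j <= n)%N ->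
  (ncorners is_concave (nu_ge n nu l) (fun x y => colr n (k%:Z - l%:Z + 1 + x%:Z - y%:Z)) j)%:Z
  - (ncorners is_convex (nu_ge n nu l) (fun x y => colr n (k%:Z - l%:Z + 1 + x%:Z - y%:Z)) j)%:Z
  = (l <= tau (pj j))%N%:Z - (l <= tau j)%N%:Z + (j == k)%:Z.
Proof.
move=> /andP[l2 ln] jr.
set s := [seq conjp nu y | y <- iota l (n.+1 - l)].
have ss : sorted geq s.
  apply: (homo_sorted (e := leq)); last exact: iota_sorted.
  by move=> x y h; apply: conjp_mono.
have Cg y : (0 < y)%N -> conjp (nu_ge n nu l) y = nth 0 s y.-1 by move=> y0; exact: conj_conj.
have Cs y : (y < n.+1 - l)%N -> nth 0 s y = conjp nu (l + y).
  by move=> yl; rewrite (nth_map 0) ?size_iota // nth_iota.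
set N := (n - l)%N.
have CN : conjp (nu_ge n nu l) N.+1 = 0%N.
  rewrite Cg // Cs /N; last by lia.
  rewrite subnKC; last by lia.
  exact: conjp_n_zero.
set c := fun x y => colr n (k%:Z - l%:Z + 1 + x%:Z - y%:Z).
have hc : forall x y, c x.+1 y.+1 = c x y.
  by move=> x y; rewrite /c !intS; congr colr; ring.
rewrite (corners_diff j hc CN).
have [tr1 _] := tau_range (pj_range jr).
have [tr2 _] := tau_range jr.
have S1 : (\sum_(1 <= y < N.+2) (c (conjp (nu_ge n nu l) y).+1 y == j))%N = (l <= tau (pj j))%N.
  rewrite (eq_big_nat _ _ (F2 := fun y => nat_of_bool (((tau (pj j) - l.-1)%N == y) && true))).
    rewrite sum_pick andbT /N; congr (nat_of_bool _); apply/idP/idP; lia.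
  move=> y /andP[y1 yN]; rewrite andbT Cg // Cs; last by rewrite /N in yN; lia.
  case: y y1 yN => // y _ yN /=.
  transitivity (colr n (a (l + y) + 1) == j).
    by rewrite /c; congr (colr n _ == j); rewrite /a !intS PoszD; ring.
  rewrite colr_succ // key //; try (by apply: pj_range); try (by rewrite /N in yN; lia).
have S2 : (\sum_(1 <= y < N.+1) (c (conjp (nu_ge n nu l) y) y == j))%N = ((l <= tau j) && (tau j < n))%N.
  rewrite (eq_big_nat _ _ (F2 := fun y => nat_of_bool (((tau j - l.-1)%N == y) && true))).
    rewrite sum_pick andbT /N; congr (nat_of_bool _); apply/idP/idP; lia.
  move=> y /andP[y1 yN]; rewrite andbT Cg // Cs; last by rewrite /N in yN; lia.
  case: y y1 yN => // y _ yN /=.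
  transitivity (colr n (a (l + y)) == j).
    by rewrite /c; congr (colr n _ == j); rewrite /a !intS PoszD; ring.
  rewrite key //; try (by rewrite /N in yN; lia).

rewrite S1 S2 -tau_n //.
case/andP: tr2 => _; rewrite leq_eqVlt => /orP[/eqP ->|lt].
  by rewrite ln ltnn eqxx /=; ring.
by rewrite lt andbT (ltn_eqF lt) addr0.
Qed.

End Main.

Lemma tel_sum (mu : seq nat) t :
  (\sum_(2 <= l < t.+2) ((conjp mu l.-1)%:Z - (conjp mu l)%:Z) =
   (conjp mu 1)%:Z - (conjp mu t.+1)%:Z)%R.
Proof.
elim: t => [|t IH]; first by rewrite big_geq // subrr.
rewrite big_nat_recr //= IH; ring.
Qed.

Lemma tel_ind (mu : seq nat) n t : (1 <= t <= n)%N ->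
  (\sum_(2 <= l < n.+1) (((conjp mu l.-1)%:Z - (conjp mu l)%:Z) * (l <= t)%N%:Z) =
   (conjp mu 1)%:Z - (conjp mu t)%:Z)%R.
Proof.
case: t => // t /andP[_ tn].
rewrite (big_cat_nat (n := t.+2)) //=; try lia.
rewrite [X in (_ + X)%R](_ : _ = 0%R); last first.
  rewrite big_nat_cond big1 // => l /andP[/andP[tl _] _].
  by rewrite leqNgt tl mulr0.
rewrite addr0 -tel_sum; apply: eq_big_nat => l /andP[_ lt].
by rewrite -ltnS lt mulr1.
Qed.

Theorem mainTheorem14 (n k : nat) (nu mu : seq nat) (tau : nat -> nat) :
  3 <= n -> 1 <= k <= n ->
  is_partition nu -> colorless n nu -> part1 nu < n ->
  is_partition mu -> part1 mu < n ->
  (forall j, 1 <= j <= n ->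
     tau (colr n ((conjp nu j)%:Z - j%:Z + k%:Z)) = j) ->
  forall j, 1 <= j <= n ->
    ((ncorners_coll is_concave n k nu mu j)%:Z
       - (ncorners_coll is_convex n k nu mu j)%:Z
     = (conjp mu (tau j))%:Z - (conjp mu (tau (if j == 1%N then n else j.-1)))%:Z
       + (if j == k then conjp mu 1 else 0%N)%:Z)%R.
Proof.
move=> n3 kr pnu _ nu1 pmu mu1 htau j jr.
have pjr := pj_range n3 jr; simpl in pjr.
set pj := if j == 1%N then n else j.-1 in pjr *.
have [tr1 _] := tau_range n3 htau pjr.
have [tr2 _] := tau_range n3 htau jr.
have mun := conjp_n_zero pmu mu1.
rewrite /ncorners_coll -!natz !natr_sum -sumrB.
set D := fun l => ((conjp mu l.-1)%:Z - (conjp mu l)%:Z)%R.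
rewrite (eq_big_nat _ _ (F2 := fun l => (D l * (l <= tau pj)%N%:Z - D l * (l <= tau j)%N%:Z
    + D l * (l <= n)%N%:Z * (j == k)%:Z)%R)); last first.
  move=> l /andP[l2 ln].
  rewrite !natrM -mulrBr !natz (per_l n3 kr pnu nu1 htau _ jr) /=; last by rewrite l2 -ltnS.
  have -> : (l <= n)%N by rewrite -ltnS.
  rewrite -/pj /D -subzn; last by apply: conjp_mono; apply: leq_pred.
  by rewrite /= mulr1 mulrDr mulrBr.
rewrite big_split /= sumrB -mulr_suml.
rewrite (tel_ind mu tr1) (tel_ind mu tr2) (tel_ind mu (n := n) (t := n)); last first.
  by rewrite (leq_trans _ n3) // leqnn.
rewrite mun; case: (j == k) => /=; ring.
Qed.
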